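(* Let $S=\{s_1,\dots,s_N\}$ and $A$ be finite, $r:S\times A\to\mathbb{R}$, and $0<\gamma_p<\gamma<1$. Suppose that for every state-action pair $(s_n,a_k)$ we observe transition counts $c_{n,k,1},\dots,c_{n,k,N}\ge 0$ with total $C_{n,k}=\sum_{i=1}^N c_{n,k,i}>0$, and let $\hat T_{\mathrm{MLE}}(s_n,a_k,s_i)=c_{n,k,i}/C_{n,k}$. Fix a probability vector $q=(q_1,\dots,q_N)$ with all $q_i>0$, and for each $(s_n,a_k)$ place the Dirichlet prior $\mathrm{Dirichlet}(\alpha_{n,k,1},\dots,\alpha_{n,k,N})$ on $T(s_n,a_k,\cdot)$ with $$\alpha_{n,k,i}=\frac{\gamma-\gamma_p}{\gamma_p}\,C_{n,k}\,q_i .$$ Let $\hat T_{\mathrm{post}}(s_n,a_k,s_i)=\dfrac{c_{n,k,i}+\alpha_{n,k,i}}{C_{n,k}+\sum_{j}\alpha_{n,k,j}}$ be the posterior mean. Then: (i) for every $(s_n,a_k)$, $\hat T_{\mathrm{post}}(s_n,a_k,\cdot)=(1-\epsilon)\hat T_{\mathrm{MLE}}(s_n,a_k,\cdot)+\epsilon\, q$ with $\epsilon=\frac{\gamma-\gamma_p}{\gamma}$, the same for all $(s_n,a_k)$; and (ii) the MDP $(S,A,r,\hat T_{\mathrm{post}})$ planned with discount $\gamma$ and the MDP $(S,A,r,\hat T_{\mathrm{MLE}})$ planned with discount $\gamma_p$ have the same optimal policies (same $\arg\max_a Q^*(s,a)$ sets in every state). In particular, for a uniform prior ($q_i=1/N$)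 the implied prior parameters are $\alpha_{n,k,i}=\frac{\gamma-\gamma_p}{\gamma_p}\cdot\frac{C_{n,k}}{N}$, which grow with the number of observed transitions $C_{n,k}$.
   Context: Planning with discount factor $\gamma$ in an MDP with transition kernel $P$ means computing the optimal action-value function $Q^*$ solving $Q^*(s,a)=r(s,a)+\gamma\sum_{s'}P(s,a,s')\max_{a'}Q^*(s',a')$; optimal policies are those choosing actions in $\arg\max_a Q^*(s,a)$. *)

(* Defs.v *)
From HB Require Import structures.
From mathcomp Require Import all_boot all_order all_algebra.
From mathcomp Require Import reals.
Set Implicit Arguments. Unset Strict Implicit. Unset Printing Implicit Defensive.
Import Order.TTheory GRing.Theory Num.Theory.
Local Open Scope ring_scope.

Section MDP.
Context {R : realType} {N : nat} {A : finType}.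

(* max over actions of Q s .; a0 only seeds the fold (A nonempty), the
   value is the true maximum whatever a0 is. *)
Definition vmax (a0 : A) (Q : 'I_N -> A -> R) (s : 'I_N) : R :=
  \big[Num.max/Q s a0]_(a : A) Q s a.

Definition bellman_opt (a0 : A) (g : R) (r : 'I_N -> A -> R)
    (P : 'I_N -> A -> 'I_N -> R) (Q : 'I_N -> A -> R) : Prop :=
  forall s a, Q s a = r s a + g * \sum_(s' < N) P s a s' * vmax a0 Q s'.

Definition greedy (Q : 'I_N -> A -> R) (s : 'I_N) (a : A) : Prop :=
  forall a' : A, Q s a' <= Q s a.

Definition Ctot (c : 'I_N -> A -> 'I_N -> nat) (n : 'I_N) (k : A) : R :=
  \sum_(i < N) (c n k i)%:R.

Definition T_mle (c : 'I_N -> A -> 'I_N -> nat) (n : 'I_N) (k : A) (i : 'I_N) : R :=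
  (c n k i)%:R / Ctot c n k.

Definition alpha (g gp : R) (q : 'I_N -> R) (c : 'I_N -> A -> 'I_N -> nat)
    (n : 'I_N) (k : A) (i : 'I_N) : R :=
  (g - gp) / gp * Ctot c n k * q i.

Definition T_post (g gp : R) (q : 'I_N -> R) (c : 'I_N -> A -> 'I_N -> nat)
    (n : 'I_N) (k : A) (i : 'I_N) : R :=
  ((c n k i)%:R + alpha g gp q c n k i) /
  (Ctot c n k + \sum_(j < N) alpha g gp q c n k j).

End MDP.

(* Main.v *)
Require Import Defs.
From HB Require Import structures.
From mathcomp Require Import all_boot all_order all_algebra.
From mathcomp Require Import reals.
From mathcomp Require Import ring lra.
Import Order.TTheory GRing.Theory Num.Theory.
Local Open Scope ring_scope.

Lemma bmax_shift (R : realType) (A : finType) (F G : A -> R) (x y d : R) :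
  x = y + d -> (forall a, F a = G a + d) ->
  \big[Num.max/x]_(a : A) F a = \big[Num.max/y]_(a : A) G a + d.
Proof.
move=> hx hF.
apply: (big_ind2 (fun u v => u = v + d)) => //.
  move=> u1 v1 u2 v2 -> ->.
  case: (leP v1 v2) => h.
    by rewrite !max_r // lerD2r.
  by rewrite !max_l ?ltW // ?ltW // ltrD2r.
Qed.

Lemma bmax_ge (R : realType) (A : finType) (F : A -> R) (x : R) a :
  F a <= \big[Num.max/x]_(b : A) F b.
Proof.
by rewrite (bigD1 a) //= le_max lexx.
Qed.

Lemma bmax_le (R : realType) (A : finType) (F : A -> R) (x M : R) :
  x <= M -> (forall a, F a <= M) -> \big[Num.max/x]_(b : A) F b <= M.
Proof.
move=> hx hF; apply: (big_ind (fun u => u <= M)) => // u v hu hv.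
by rewrite ge_max hu hv.
Qed.

Lemma bmax_dist (R : realType) (A : finType) (F G : A -> R) (x : A) (D : R) :
  (forall a, `|F a - G a| <= D) ->
  `|\big[Num.max/F x]_(b : A) F b - \big[Num.max/G x]_(b : A) G b| <= D.
Proof.
move=> hD.
have h1 : \big[Num.max/G x]_(b : A) G b <= \big[Num.max/F x]_(b : A) F b + D.
  apply: bmax_le => [|a]; [have := hD x|have := hD a];
    rewrite ler_norml => /andP[k1 k2];
    [have := @bmax_ge _ _ F (F x) x | have := @bmax_ge _ _ F (F x) a]; lra.
have h2 : \big[Num.max/F x]_(b : A) F b <= \big[Num.max/G x]_(b : A) G b + D.
  apply: bmax_le => [|a]; [have := hD x|have := hD a];
    rewrite ler_norml => /andP[k1 k2];
    [have := @bmax_ge _ _ G (G x) x | have := @bmax_ge _ _ G (G x) a]; lra.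
rewrite ler_norml; apply/andP; split; lra.
Qed.

Lemma bmax_seed (R : realType) (A : finType) (F : A -> R) (x : R) :
  x <= \big[Num.max/x]_(b : A) F b.
Proof.
by elim/big_rec: _ => // i y _ hy; rewrite le_max hy orbT.
Qed.

Lemma bellman_unique (R : realType) (N : nat) (A : finType) (a0 : A)
  (gp : R) (r : 'I_N -> A -> R) (P : 'I_N -> A -> 'I_N -> R) (Q Q' : 'I_N -> A -> R) :
  0 <= gp -> gp < 1 -> (forall s a s', 0 <= P s a s') ->
  (forall s a, \sum_(s' < N) P s a s' = 1) ->
  bellman_opt a0 gp r P Q -> bellman_opt a0 gp r P Q' -> forall s a, Q s a = Q' s a.
Proof.
move=> g0 g1 P0 P1 HQ HQ'.
set D := \big[Num.max/0]_(s : 'I_N) \big[Num.max/0]_(a : A) `|Q s a - Q' s a|.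
have D0 : 0 <= D by apply: bmax_seed.
have HD : forall s a, `|Q s a - Q' s a| <= D.
  move=> s a; apply: le_trans (@bmax_ge _ _ _ _ s).
  exact: (@bmax_ge _ _ (fun a => `|Q s a - Q' s a|)).
have HV : forall s, `|vmax a0 Q s - vmax a0 Q' s| <= D.
  by move=> s; apply: bmax_dist.
have Hg : forall s a, `|Q s a - Q' s a| <= gp * D.
  move=> s a; rewrite HQ HQ' opprD addrACA subrr add0r -mulrBr -sumrB normrM ger0_norm //.
  apply: ler_wpM2l => //.
  apply: le_trans (ler_norm_sum _ _ _) _.
  apply: (@le_trans _ _ (\sum_(s' < N) P s a s' * D)).
    apply: ler_sum => s' _; rewrite -mulrBr normrM ger0_norm //.
    by apply: ler_wpM2l.
  by rewrite -mulr_suml P1 mul1r.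
have : D <= gp * D.
  apply: bmax_le; first by rewrite mulr_ge0.
  move=> s; apply: bmax_le; first by rewrite mulr_ge0.
  by move=> a; apply: Hg.
move=> hDD.
have D00 : D = 0 by nra.
move=> s a; apply/eqP; rewrite -subr_eq0 -normr_eq0 eq_le normr_ge0 andbT.
by rewrite -D00 HD.
Qed.

Theorem mainTheorem2 (R : realType) (N : nat) (A : finType) (a0 : A)
    (r : 'I_N -> A -> R) (g gp : R)
    (c : 'I_N -> A -> 'I_N -> nat) (q : 'I_N -> R) :
  0 < gp -> gp < g -> g < 1 ->
  (forall n k, (0 : R) < Ctot c n k) ->
  (forall i, 0 < q i) -> \sum_(i < N) q i = 1 ->
  (* (i) posterior mean = (1-eps) MLE + eps q, eps = (g-gp)/g *)
  (forall n k i,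
      T_post g gp q c n k i
      = (1 - (g - gp) / g) * T_mle c n k i + (g - gp) / g * q i)
  /\
  (* (ii) same optimal policies: greedy sets of Q* agree in every state *)
  (forall Q1 Q2 : 'I_N -> A -> R,
      bellman_opt a0 g r (T_post g gp q c) Q1 ->
      bellman_opt a0 gp r (T_mle c) Q2 ->
      forall s a, greedy Q1 s a <-> greedy Q2 s a)
  /\
  (* uniform prior case *)
  ((forall i, q i = N%:R^-1) ->
   forall n k i, alpha g gp q c n k i = (g - gp) / gp * (Ctot c n k / N%:R)).
Proof.
move=> gp0 gpg g1 C0 q0 q1.
have g0 : 0 < g by lra.
have Hi : forall n k i,
    T_post g gp q c n k i
    = (1 - (g - gp) / g) * T_mle c n k i + (g - gp) / g * q i.
  move=> n k i; rewrite /T_post /T_mle /alpha.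
  rewrite -mulr_sumr q1 mulr1.
  have := C0 n k; set C := Ctot c n k => C0'.
  field.
  by apply/and4P; split; apply/lt0r_neq0 => //; nra.
have Tm1 : forall (s : 'I_N) (a : A), \sum_(s' < N) T_mle c s a s' = 1 :> R.
  move=> s a; rewrite /T_mle -mulr_suml -/(Ctot c s a) divff //.
  by have := C0 s a; rewrite lt0r => /andP[].
have Tm0 : forall (s : 'I_N) (a : A) (s' : 'I_N), 0 <= T_mle c s a s' :> R.
  by move=> s a s'; rewrite /T_mle divr_ge0 // ltW.
split; first exact: Hi.
split; last first.
  by move=> hq n k i; rewrite /alpha hq mulrA.
move=> Q1 Q2 H1 H2.
set K0 := (g - gp) * \sum_(s' < N) q s' * vmax a0 Q1 s'.
set d := K0 / (1 - gp).
have Hd : (1 - gp) * d = K0 by rewrite /d mulrC divfK //; lra.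
have Hs : forall s, vmax a0 (fun s a => Q1 s a - d) s = vmax a0 Q1 s - d.
  by move=> s; apply: bmax_shift.
have B : bellman_opt a0 gp r (T_mle c) (fun s a => Q1 s a - d).
  move=> s a /=.
  under eq_bigr => s' _ do rewrite Hs.
  rewrite H1.
  have S1 : \sum_(s' < N) T_post g gp q c s a s' * vmax a0 Q1 s'
     = (1 - (g - gp) / g) * \sum_(s' < N) T_mle c s a s' * vmax a0 Q1 s'
       + (g - gp) / g * \sum_(s' < N) q s' * vmax a0 Q1 s'.
    rewrite !mulr_sumr -big_split /=; apply: eq_bigr => s' _.
    by rewrite Hi mulrDl !mulrA.
  have S2 : \sum_(s' < N) T_mle c s a s' * (vmax a0 Q1 s' - d)
     = \sum_(s' < N) T_mle c s a s' * vmax a0 Q1 s' - d.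
    rewrite -[d in RHS]mul1r -(Tm1 s a) mulr_suml -sumrB.
    by apply: eq_bigr => s' _; rewrite mulrBr.
  rewrite S1 S2.
  move: Hd; rewrite /K0.
  set X := \sum_(s' < N) T_mle c s a s' * vmax a0 Q1 s'.
  set Y := \sum_(s' < N) q s' * vmax a0 Q1 s'.
  move=> Hd.
  have gne : g != 0 by apply/lt0r_neq0.
  have -> : (g - gp) / g * Y = ((g - gp) * Y) / g by rewrite mulrAC.
  rewrite -Hd.
  by field.
have gp1 : gp < 1 by lra.
have E := @bellman_unique R N A a0 gp r (T_mle c) _ _ (ltW gp0) gp1 Tm0 Tm1 B H2.
move=> s a; rewrite /greedy; split => h a'.
  by rewrite -!E /=; have := h a'; lra.
by have := h a'; rewrite -!E /=; lra.
Qed.
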